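(* Let $H$ and $E$ be Hilbert spaces, let $T:H\to H$ be a bounded linear operator with $\ker T=\{0\}$, let $\gamma:E\to H$ be a bounded linear operator with $\ker\gamma=\{0\}$ and $\mathcal{R}(T)\cap\mathcal{R}(\gamma)=\{0\}$, and let $\Lambda$ be a linear operator in $E$ with domain $\mathcal{D}(\Lambda)$. Define $A,\Gamma_0$ on $\mathcal{R}(T)\dot+\mathcal{R}(\gamma)$ by $A(Tf+\gamma\varphi)=f$, $\Gamma_0(Tf+\gamma\varphi)=\varphi$, and $\Gamma_1$ on $\mathcal{R}(T)\dot+\gamma\mathcal{D}(\Lambda)$ by $\Gamma_1(Tf+\gamma\varphi)=\gamma^*f+\Lambda\varphi$. For $\lambda\in\mathbb{C}$ with $I-\lambda T$ boundedly invertible, let $M(\lambda)$ be defined by $M(\lambda)\Gamma_0u=\Gamma_1u$ for $u\in\ker(A-\lambda I)\cap\mathcal{D}(\Gamma_1)$. Then $\lambda\mapsto M(\lambda)-M(0)$, defined for $\lambda$ with $I-\lambda T$ boundedly invertible, is an analytic operator-function whose values are bounded operators in $E$.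
   Context: $\mathcal{R}(\cdot)$ denotes range, $\dot+$ direct sum, $\gamma^*$ the adjoint of $\gamma$. Note $M(0)=\Lambda$ on $\mathcal{D}(\Lambda)$; the statement means $M(\lambda)-M(0)$, defined on $\mathcal{D}(\Lambda)$, extends to a bounded operator on $E$ depending analytically on $\lambda$. *)

(* Defs.v *)
From mathcomp Require Import all_boot all_algebra.
From mathcomp Require Import reals complex.
Set Implicit Arguments. Unset Strict Implicit. Unset Printing Implicit Defensive.
Import GRing.Theory Num.Theory.
Local Open Scope ring_scope.
Local Open Scope complex_scope.

Section Hilbert.
Variable R : realType.
Local Notation C := (R[i]).

Definition is_inner_product (V : lmodType C) (ip : V -> V -> C) : Prop :=
  [/\ (forall (a : C) (x y z : V), ip (a *: x + y) z = a * ip x z + ip y z),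
      (forall x y : V, ip x y = (ip y x)^*),
      (forall x : V, 0 <= ip x x) &
      (forall x : V, ip x x = 0 -> x = 0)].

Definition nrm (V : lmodType C) (ip : V -> V -> C) (x : V) : C := sqrtC (ip x x).

Definition complete_ip (V : lmodType C) (ip : V -> V -> C) : Prop :=
  forall u : nat -> V,
    (forall e : C, 0 < e -> exists N : nat, forall m n : nat,
        (N <= m)%N -> (N <= n)%N -> nrm ip (u m - u n) < e) ->
    exists l : V, forall e : C, 0 < e -> exists N : nat, forall n : nat,
        (N <= n)%N -> nrm ip (u n - l) < e.

Definition is_hilbert (V : lmodType C) (ip : V -> V -> C) : Prop :=
  is_inner_product ip /\ complete_ip ip.

Definition is_linear (U V : lmodType C) (f : U -> V) : Prop :=
  forall (a : C) (x y : U), f (a *: x + y) = a *: f x + f y.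

Definition bounded_op (U V : lmodType C) (ipU : U -> U -> C) (ipV : V -> V -> C)
  (f : U -> V) : Prop :=
  is_linear f /\ exists M : C, 0 <= M /\ forall x : U, nrm ipV (f x) <= M * nrm ipU x.

Definition is_adjoint (U V : lmodType C) (ipU : U -> U -> C) (ipV : V -> V -> C)
  (g : U -> V) (gs : V -> U) : Prop :=
  forall (x : U) (y : V), ipV (g x) y = ipU x (gs y).

Definition bdd_invertible_at (H : lmodType C) (ipH : H -> H -> C) (T : H -> H)
  (lam : C) : Prop :=
  exists S : H -> H, bounded_op ipH ipH S /\
    (forall x, S (x - lam *: T x) = x) /\ (forall x, S x - lam *: T (S x) = x).

(* F : C -> (E -> E) is an analytic (holomorphic in operator norm) operator
   function on the set Om *)
Definition analytic_opfun_on (E : lmodType C) (ipE : E -> E -> C)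
  (Om : C -> Prop) (F : C -> E -> E) : Prop :=
  forall l0, Om l0 -> exists D : E -> E, bounded_op ipE ipE D /\
    forall e : C, 0 < e -> exists d : C, 0 < d /\
      forall l, Om l -> 0 < `|l - l0| < d -> forall x : E,
        nrm ipE ((l - l0)^-1 *: (F l x - F l0 x) - D x) <= e * nrm ipE x.

Definition linear_op_dom (E : lmodType C) (Dom : E -> Prop) (Lam : E -> E) : Prop :=
  Dom 0 /\ (forall (a : C) x y, Dom x -> Dom y -> Dom (a *: x + y)) /\
  (forall (a : C) x y, Dom x -> Dom y -> Lam (a *: x + y) = a *: Lam x + Lam y).

Section Triplet.
Variables (H E : lmodType C) (T : H -> H) (g : E -> H) (gs : H -> E)
  (Dom : E -> Prop) (Lam : E -> E).

Definition A_rel (u v : H) : Prop := exists f phi, u = T f + g phi /\ v = f.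
Definition Gamma0_rel (u : H) (w : E) : Prop :=
  exists f phi, u = T f + g phi /\ w = phi.
Definition Gamma1_rel (u : H) (w : E) : Prop :=
  exists f phi, Dom phi /\ u = T f + g phi /\ w = gs f + Lam phi.

Definition M_rel (lam : C) (phi psi : E) : Prop :=
  exists u : H, A_rel u (lam *: u) /\ Gamma0_rel u phi /\ Gamma1_rel u psi.
End Triplet.

End Hilbert.

(* Main.v *)
Require Import Defs.
From mathcomp Require Import all_boot all_order all_algebra.
From mathcomp Require Import reals complex.
From mathcomp Require Import ring.
From Stdlib Require Import ClassicalEpsilon.
Set Implicit Arguments. Unset Strict Implicit. Unset Printing Implicit Defensive.
Import Order.TTheory GRing.Theory Num.Theory.
Local Open Scope ring_scope.

Section IP.
Variable R : realType.
Local Notation C := R[i].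
Variable V : lmodType C.
Variable ip : V -> V -> C.
Hypothesis hip : is_inner_product ip.

Lemma ipDl x y z : ip (x + y) z = ip x z + ip y z.
Proof. have [h _ _ _] := hip. by rewrite -{1}(scale1r x) h mul1r. Qed.

Lemma ip0l z : ip 0 z = 0.
Proof.
have e := ipDl 0 0 z; rewrite addr0 in e.
by apply: (addrI (ip 0 z)); rewrite addr0 -e.
Qed.

Lemma ipZl a x z : ip (a *: x) z = a * ip x z.
Proof. have [h _ _ _] := hip. by rewrite -(addr0 (a *: x)) h ip0l addr0. Qed.

Lemma ipNl x z : ip (- x) z = - ip x z.
Proof. by rewrite -scaleN1r ipZl mulN1r. Qed.

Lemma ipBl x y z : ip (x - y) z = ip x z - ip y z.
Proof. by rewrite ipDl ipNl. Qed.

Lemma ipC x y : ip x y = conjc (ip y x).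
Proof. have [_ h _ _] := hip; by rewrite h. Qed.

Lemma ipDr x y z : ip x (y + z) = ip x y + ip x z.
Proof. by rewrite ipC ipDl rmorphD /= -!ipC. Qed.

Lemma ipZr a x y : ip x (a *: y) = conjc a * ip x y.
Proof. by rewrite ipC ipZl rmorphM /= -!ipC. Qed.

Lemma ip0r x : ip x 0 = 0.
Proof. by rewrite ipC ip0l rmorph0. Qed.

Lemma ipNr x z : ip x (- z) = - ip x z.
Proof. by rewrite ipC ipNl rmorphN /= -ipC. Qed.

Lemma ipBr x y z : ip x (y - z) = ip x y - ip x z.
Proof. by rewrite ipDr ipNr. Qed.

Lemma ip_ge0 x : 0 <= ip x x.
Proof. by have [_ _ h _] := hip. Qed.

Lemma ip_eq0 x : ip x x = 0 -> x = 0.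
Proof. by have [_ _ _ h] := hip; apply: h. Qed.

Lemma nrmE x : nrm ip x = sqrtC (ip x x).
Proof. by []. Qed.

Lemma nrm_ge0 x : 0 <= nrm ip x.
Proof. by rewrite nrmE sqrtC_ge0 ip_ge0. Qed.

Lemma nrmK x : nrm ip x ^+ 2 = ip x x.
Proof. by rewrite nrmE sqrtCK. Qed.

Lemma nrm_eq0 x : nrm ip x = 0 -> x = 0.
Proof. by rewrite nrmE => /eqP; rewrite sqrtC_eq0 => /eqP /ip_eq0. Qed.

Lemma nrm0 : nrm ip 0 = 0.
Proof. by rewrite nrmE ip0l sqrtC0. Qed.

Lemma normCK' (z : C) : `|z| ^+ 2 = z * conjc z.
Proof. exact: normCK. Qed.
Lemma CrealE' (z : C) : (z \is Num.real) = (conjc z == z).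
Proof. exact: CrealE. Qed.
Lemma norm_conjC' (z : C) : `|conjc z| = `|z|.
Proof. exact: norm_conjC. Qed.
Lemma conjcK' (z : C) : conjc (conjc z) = z.
Proof. exact: conjCK. Qed.

Lemma nrmZ a x : nrm ip (a *: x) = `|a| * nrm ip x.
Proof.
rewrite !nrmE ipZl ipZr mulrA -normCK' sqrtCM ?nnegrE ?exprn_ge0 ?ip_ge0 //.
by rewrite sqrCK.
Qed.

Lemma nrmN x : nrm ip (- x) = nrm ip x.
Proof. by rewrite -scaleN1r nrmZ normrN1 mul1r. Qed.

Lemma sq_le (a b : C) : 0 <= a -> 0 <= b -> a ^+ 2 <= b ^+ 2 -> a <= b.
Proof. by move=> ha hb; rewrite (ler_pXn2r (n:=2)) ?nnegrE. Qed.

Lemma CS2 x y : `|ip x y| ^+ 2 <= ip x x * ip y y.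
Proof.
set p := ip x y; set q := ip y y.
have [q0|qn0] := eqVneq q 0.
  have y0 : y = 0 by exact: ip_eq0.
  by rewrite /p y0 ip0r normr0 expr0n /= -/q q0 mulr0.
have qgt0 : 0 < q by rewrite lt_def qn0 ip_ge0.
have qc : (conjc q) = q by exact: (geC0_conj (ip_ge0 y)).
set t := p / q.
have := ip_ge0 (x - t *: y).
have -> : ip (x - t *: y) (x - t *: y) =
   ip x x - (conjc t) * p - t * (conjc p) + t * (conjc t) * q.
  rewrite !ipBl !ipBr !ipZl !ipZr -/p -/q (ipC y x) -/p; ring.
have -> : (conjc t) = (conjc p) / q by rewrite /t rmorphM /= fmorphV /= qc.
rewrite normCK' /t => h.
have : 0 <= (ip x x - (conjc p) / q * p - p / q * (conjc p) + p / q * ((conjc p) / q) * q) * q.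
  by rewrite mulr_ge0 // ltW.
suff -> : (ip x x - (conjc p) / q * p - p / q * (conjc p) + p / q * ((conjc p) / q) * q) * q
   = ip x x * q - p * (conjc p) by rewrite subr_ge0.
by field.
Qed.

Lemma CS x y : `|ip x y| <= nrm ip x * nrm ip y.
Proof.
apply: sq_le; rewrite ?mulr_ge0 ?nrm_ge0 //.
by rewrite exprMn !nrmK CS2.
Qed.

Lemma nrm_tri x y : nrm ip (x + y) <= nrm ip x + nrm ip y.
Proof.
apply: sq_le; rewrite ?addr_ge0 ?nrm_ge0 //.
rewrite nrmK sqrrD !nrmK ipDl !ipDr.
set p := ip x y.
rewrite (ipC y x) -/p.
have h : p + (conjc p) <= (nrm ip x * nrm ip y) *+ 2.
  apply: le_trans (real_ler_norm _) _.
    by rewrite CrealE' rmorphD /= conjcK' addrC.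
  apply: le_trans (ler_normD _ _) _.
  by rewrite norm_conjC' mulr2n lerD ?CS.
have -> : ip x x + p + ((conjc p) + ip y y) = ip x x + ip y y + (p + (conjc p)) by ring.
have -> : ip x x + nrm ip x * nrm ip y *+ 2 + ip y y = ip x x + ip y y + (nrm ip x * nrm ip y) *+ 2 by ring.
by rewrite lerD2l.
Qed.

End IP.

Lemma half_trick (F : numFieldType) (n a c : F) :
  0 <= n -> c <= 2%:R^-1 -> n <= a + c * n -> n <= 2%:R * a.
Proof.
move=> n0 c2 h.
have h2 : n <= a + 2%:R^-1 * n by apply: le_trans h _; rewrite lerD2l ler_wpM2r.
rewrite -subr_ge0.
have -> : 2%:R * a - n = 2%:R * (a + 2%:R^-1 * n - n).
  by field; rewrite ?pnatr_eq0 // lt0r_neq0 ?ltr0n.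
by rewrite mulr_ge0 // subr_ge0.
Qed.

Lemma pick_d (F : numFieldType) (e k1 K : F) : 0 < e -> 0 <= k1 -> 0 <= K ->
  exists d, 0 < d /\ forall r, 0 <= r -> r < d -> r * k1 <= 2%:R^-1 /\ r * K <= e.
Proof.
move=> e0 k10 K0.
set s := 2%:R * k1 + K / e + 1.
have s0 : 0 < s.
  apply: (lt_le_trans ltr01); rewrite -subr_ge0 /s addrK; apply: addr_ge0; [apply: mulr_ge0 => // | apply: divr_ge0 => //; exact: ltW].
exists (1 / s : F); split; first by rewrite divr_gt0 // ltr01.
move=> r r0; rewrite ltr_pdivlMr // => h.
have e1 : r * s = 2%:R * (r * k1) + (r * K) / e + r by rewrite /s; ring.
have h1 : r * s <= 1 by exact: ltW.
have rk : 0 <= r * k1 by rewrite mulr_ge0.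
have rK : 0 <= r * K by rewrite mulr_ge0.
split.
  rewrite -div1r ler_pdivlMr ?ltr0n // mulrC.
  apply: (le_trans _ h1); rewrite e1 -addrA lerDl addr_ge0 // divr_ge0 // ltW //.
have hh : r * K / e <= 1.
  apply: (le_trans _ h1); rewrite e1 -subr_ge0 (_ : _ - _ = 2%:R * (r * k1) + r); [rewrite addr_ge0 ?mulr_ge0 // | ring].
by move: hh; rewrite (ler_pdivrMr _ _ e0) mul1r.
Qed.

Lemma zdec (Z : zmodType) (a b c d : Z) : a + b = c + d -> a - c = d - b.
Proof. move=> e. by rewrite -{1}(addrK b a) e addrAC (addrC c d) addrK. Qed.

Section Ops.
Variable R : realType.
Local Notation C := R[i].

Section Lin.
Variables (U W : lmodType C) (f : U -> W).
Hypothesis hf : is_linear f.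
Lemma lin0 : f 0 = 0.
Proof.
have e := hf 1 0 0; rewrite !scale1r addr0 in e.
by apply: (addrI (f 0)); rewrite addr0 -e.
Qed.
Lemma linD x y : f (x + y) = f x + f y.
Proof. by have := hf 1 x y; rewrite !scale1r. Qed.
Lemma linZ a x : f (a *: x) = a *: f x.
Proof. by have := hf a x 0; rewrite addr0 lin0 addr0. Qed.
Lemma linN x : f (- x) = - f x.
Proof. by rewrite -scaleN1r linZ scaleN1r. Qed.
Lemma linB x y : f (x - y) = f x - f y.
Proof. by rewrite linD linN. Qed.
End Lin.

Section Adj.
Variables (E H : lmodType C) (ipE : E -> E -> C) (ipH : H -> H -> C).
Hypotheses (hipE : is_inner_product ipE) (hipH : is_inner_product ipH).
Variables (g : E -> H) (gs : H -> E).
Hypothesis gL : is_linear g.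
Hypothesis adj : is_adjoint ipE ipH g gs.

Lemma adj_lin : is_linear gs.
Proof.
move=> a y z.
apply/eqP; rewrite -subr_eq0; apply/eqP; apply: (ip_eq0 hipE).
set d := gs (a *: y + z) - (a *: gs y + gs z).
rewrite {2}/d (ipBr hipE) (ipDr hipE) (ipZr hipE) -!adj (ipDr hipH) (ipZr hipH).
by rewrite subrr.
Qed.

Lemma adj_bnd (Ng : C) : 0 <= Ng ->
  (forall x, nrm ipH (g x) <= Ng * nrm ipE x) ->
  forall y, nrm ipE (gs y) <= Ng * nrm ipH y.
Proof.
move=> Ng0 gB y.
set n := nrm ipE (gs y).
have h : n * n <= (Ng * nrm ipH y) * n.
  rewrite -expr2 /n (nrmK ipE) -adj.
  have r : 0 <= ipH (g (gs y)) y by rewrite adj (ip_ge0 hipE).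
  apply: le_trans (real_ler_norm (ger0_real r)) _.
  apply: le_trans (CS hipH _ _) _.
  rewrite mulrAC; apply: ler_wpM2r; first exact: nrm_ge0.
  exact: gB.
have := nrm_ge0 hipE (gs y); rewrite -/n le_eqVlt => /orP [/eqP <-|npos].
  by rewrite mulr_ge0 ?nrm_ge0.
by rewrite -(ler_pM2r npos).
Qed.
End Adj.
End Ops.

Local Open Scope complex_scope.

Theorem corollary1 (R : realType)
  (H E : lmodType R[i]) (ipH : H -> H -> R[i]) (ipE : E -> E -> R[i])
  (T : H -> H) (g : E -> H) (gs : H -> E) (Dom : E -> Prop) (Lam : E -> E) :
  is_hilbert ipH -> is_hilbert ipE ->
  bounded_op ipH ipH T -> (forall f, T f = 0 -> f = 0) ->
  bounded_op ipE ipH g -> (forall phi, g phi = 0 -> phi = 0) ->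
  (forall f phi, T f = g phi -> T f = 0) ->
  is_adjoint ipE ipH g gs ->
  linear_op_dom Dom Lam ->
  exists B : R[i] -> E -> E,
    (forall lam, bdd_invertible_at ipH T lam -> bounded_op ipE ipE (B lam)) /\
    analytic_opfun_on ipE (bdd_invertible_at ipH T) B /\
    (forall lam, bdd_invertible_at ipH T lam ->
       (forall phi, (exists psi, M_rel T g gs Dom Lam lam phi psi) <-> Dom phi) /\
       (forall phi psi psi', M_rel T g gs Dom Lam lam phi psi ->
          M_rel T g gs Dom Lam lam phi psi' -> psi = psi') /\
       (forall phi psi psi0, M_rel T g gs Dom Lam lam phi psi ->
          M_rel T g gs Dom Lam 0 phi psi0 -> psi - psi0 = B lam phi)).
Proof.
move=> hH hE [TL [NT [NT0 TB]]] Tinj [gL [Ng [Ng0 gB]]] ginj Tg adj LD.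
have hipH : is_inner_product ipH by case: hH.
have hipE : is_inner_product ipE by case: hE.
have gsL := adj_lin hipE hipH adj.
have gsB := adj_bnd hipE hipH adj Ng0 gB.
have [Sf hS] : exists Sf : R[i] -> H -> H, forall l, bdd_invertible_at ipH T l ->
    bounded_op ipH ipH (Sf l) /\ (forall x, Sf l (x - l *: T x) = x) /\
    (forall x, Sf l x - l *: T (Sf l x) = x).
  exists (fun l => epsilon (inhabits id) (fun S : H -> H => bounded_op ipH ipH S /\
    (forall x, S (x - l *: T x) = x) /\ (forall x, S x - l *: T (S x) = x))).
  move=> l hl; exact: (epsilon_spec (inhabits (@id H)) _ hl).
have dec : forall f phi f' phi', T f + g phi = T f' + g phi' -> f = f' /\ phi = phi'.
  move=> f phi f' phi' /zdec; rewrite -(linB TL) -(linB gL) => e.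
  have e0 : T (f - f') = 0 by exact: Tg e.
  have ff : f = f' by apply/eqP; rewrite -subr_eq0; apply/eqP; exact: Tinj.
  split => //; apply/eqP; rewrite eq_sym -subr_eq0; apply/eqP; apply: ginj.
  by rewrite -e.
have Mchar : forall l phi psi, M_rel T g gs Dom Lam l phi psi ->
    Dom phi /\ exists f, f - l *: T f = l *: g phi /\ psi = gs f + Lam phi.
  move=> l phi psi [u [[f1 [phi1 [eu1 el]]] [[f2 [phi2 [eu2 ->]]] [f3 [phi3 [D3 [eu3 ->]]]]]]].
  have [e13 e13'] := dec _ _ _ _ (etrans (esym eu1) eu3).
  have [_ e12] := dec _ _ _ _ (etrans (esym eu1) eu2).
  subst f3 phi3 phi2; split => //; exists f1; split => //.
  have e : f1 = l *: T f1 + l *: g phi1 by rewrite -scalerDr -eu1 el.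
  by rewrite {1}e addrAC subrr add0r.
exists (fun l phi => gs (Sf l (l *: g phi))).
split; [|split].
- move=> l hl; have [[SL [NS [NS0 SB]]] [S2 S3]] := hS l hl; split.
    move=> a x y /=.
    by rewrite gL scalerDr scalerA mulrC -scalerA SL gsL.
  exists (Ng * (NS * (`|l| * Ng))); split.
    by rewrite !mulr_ge0 ?normr_ge0.
  move=> x /=.
  apply: le_trans (gsB _) _; rewrite -!mulrA; apply: ler_wpM2l => //.
  apply: le_trans (SB _) _; apply: ler_wpM2l => //.
  rewrite (nrmZ hipH); apply: ler_wpM2l; first exact: normr_ge0.
  exact: gB.
- move=> l0 hl0; have [[SL0 [N0 [N00 SB0]]] [S20 S30]] := hS l0 hl0.
  exists (fun phi => gs (Sf l0 (Sf l0 (g phi)))); split.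
    split.
      by move=> a x y /=; rewrite gL SL0 SL0 gsL.
    exists (Ng * (N0 * (N0 * Ng))); split; first by rewrite !mulr_ge0.
    move=> x /=.
    apply: le_trans (gsB _) _; rewrite -!mulrA; apply: ler_wpM2l => //.
    apply: le_trans (SB0 _) _; apply: ler_wpM2l => //.
    apply: le_trans (SB0 _) _; apply: ler_wpM2l => //.
  move=> e e0.
  set K := Ng * (N0 * (NT * (2%:R * (N0 * (N0 * Ng))))).
  have K0 : 0 <= K by rewrite /K !mulr_ge0 ?ler0n.
  have [d [d0 hd]] := @pick_d _ e (N0 * NT) K e0 (mulr_ge0 N00 NT0) K0.
  exists d; split => //.
  move=> l hl /andP [ll0 lld] x.
  have [[SL [NS [NS0 SB]]] [S2 S3]] := hS l hl.
  have [hk hK] := hd `|l - l0| (normr_ge0 _) lld.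
  have lnl0 : l - l0 != 0 by rewrite -normr_gt0.
  have comm : forall y, T (Sf l y) = Sf l (T y).
    move=> y; have := S2 (T (Sf l y)).
    rewrite -(linZ TL) -(linB TL) S3 => ->; by [].
  have F1 : forall y, Sf l y = Sf l0 y + (l - l0) *: Sf l0 (T (Sf l y)).
    move=> y.
    have ey : y = (Sf l y - l0 *: T (Sf l y)) - (l - l0) *: T (Sf l y).
      by rewrite -{1}(S3 y) scalerBl opprB addrA subrK.
    by rewrite {2}ey (linB SL0) (linZ SL0) S20 subrK.
  have F3 : forall y, nrm ipH (Sf l y) <= 2%:R * (N0 * nrm ipH y).
    move=> y; apply: (half_trick (c := `|l - l0| * (N0 * NT))) => //.
      exact: nrm_ge0.
    rewrite {1}F1; apply: le_trans (nrm_tri hipH _ _) _.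
    apply: lerD; first exact: SB0.
    rewrite (nrmZ hipH) -mulrA; apply: ler_wpM2l; first exact: normr_ge0.
    apply: le_trans (SB0 _) _; rewrite -mulrA; apply: ler_wpM2l => //.
  have F2 : forall w, l *: Sf l w - l0 *: Sf l0 w = (l - l0) *: Sf l (Sf l0 w).
    move=> w.
    have ea := S30 w.
    have e1 : Sf l w = Sf l0 w + (l - l0) *: Sf l (T (Sf l0 w)).
      rewrite -{1}ea.
      have -> : Sf l0 w - l0 *: T (Sf l0 w) =
          (Sf l0 w - l *: T (Sf l0 w)) + (l - l0) *: T (Sf l0 w).
        by rewrite scalerBl addrA subrK.
      by rewrite (linD SL) (linZ SL) S2.
    have e2 : Sf l (Sf l0 w) = Sf l0 w + l *: Sf l (T (Sf l0 w)).
      by rewrite -comm -{2}(S3 (Sf l0 w)) subrK.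
    rewrite e1 e2 !scalerDr !scalerA (mulrC (l - l0) l) scalerBl addrAC.
    by [].
  rewrite /= (linZ SL) (linZ SL0) -(linB gsL) -(linZ gsL) -(linB gsL) F2.
  rewrite scalerA mulVf // scale1r {1}F1 addrAC subrr add0r.
  apply: le_trans (gsB _) _.
  apply: (@le_trans _ _ (Ng * (`|l - l0| * (N0 * (NT * (2%:R * (N0 * (N0 * (Ng * nrm ipE x))))))))).
    apply: ler_wpM2l => //.
    rewrite (nrmZ hipH); apply: ler_wpM2l; first exact: normr_ge0.
    apply: le_trans (SB0 _) _; apply: ler_wpM2l => //.
    apply: le_trans (TB _) _; apply: ler_wpM2l => //.
    apply: le_trans (F3 _) _; apply: ler_wpM2l; first by rewrite ler0n.
    apply: ler_wpM2l => //.
    apply: le_trans (SB0 _) _; apply: ler_wpM2l => //.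
  have -> : Ng * (`|l - l0| * (N0 * (NT * (2%:R * (N0 * (N0 * (Ng * nrm ipE x)))))))
     = (`|l - l0| * K) * nrm ipE x by rewrite /K; ring.
  by apply: ler_wpM2r => //; exact: nrm_ge0.
- move=> l hl; have [[SL [NS [NS0 SB]]] [S2 S3]] := hS l hl; split; [|split].
  + move=> phi; split; first by move=> [psi /Mchar []].
    move=> Dphi.
    have e3 := S3 (l *: g phi).
    exists (gs (Sf l (l *: g phi)) + Lam phi), (T (Sf l (l *: g phi)) + g phi).
    split; [|split].
    * exists (Sf l (l *: g phi)), phi; split => //.
      by rewrite scalerDr -{2}e3 addrC subrK.
    * by exists (Sf l (l *: g phi)), phi.
    * by exists (Sf l (l *: g phi)), phi.
  + move=> phi psi psi' /Mchar [_ [f [ef ->]]] /Mchar [_ [f' [ef' ->]]].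
    have -> : f = Sf l (l *: g phi) by rewrite -ef S2.
    have -> : f' = Sf l (l *: g phi) by rewrite -ef' S2.
    by [].
  + move=> phi psi psi0 /Mchar [_ [f [ef ->]]] /Mchar [_ [f0 [ef0 ->]]].
    rewrite !scale0r subr0 in ef0.
    have -> : f = Sf l (l *: g phi) by rewrite -ef S2.
    by rewrite ef0 (lin0 gsL) add0r addrK.
Qed.
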